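(* For integers $n,k$, let $B(n,k)$ be the number of partitions $\lambda\in\mathcal{H}_n$ with $\mathrm{even}(\lambda)=k$ (so $B(n,k)=0$ if $k<0$ or $n\le 0$). Then $B(1,0)=1$ and for all $n\ge 2$ and all integers $k$, $$B(n,k)=B(n-1,k)+B(n-1,k-1)+B(n-2,k)-B(n-2,k-1).$$
   Context: A partition is a finite nonempty weakly decreasing sequence $\lambda=(\lambda_1,\ldots,\lambda_k)$ of positive integers; $\ell(\lambda)=k$ is its number of parts. The perimeter is $\Gamma(\lambda)=\lambda_1+\ell(\lambda)-1$; $\mathcal{H}_n$ is the set of partitions with perimeter $n$ (empty for $n\le 0$). $\mathrm{even}(\lambda)=|\{1\le i\le \ell(\lambda):\lambda_i\text{ is even}\}|$. *)

(* Defs.v *)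
From mathcomp Require Import all_boot all_order all_algebra.
Set Implicit Arguments. Unset Strict Implicit. Unset Printing Implicit Defensive.
Import Order.TTheory GRing.Theory Num.Theory.

Definition is_partition (l : seq nat) : bool :=
  [&& l != [::], all (fun x => 0 < x) l & sorted geq l].

Definition perimeter (l : seq nat) : nat := head 0 l + size l - 1.

Definition even_parts (l : seq nat) : nat := count (fun x => ~~ odd x) l.

Fixpoint bseqs (b len : nat) : seq (seq nat) :=
  match len with
  | 0 => [:: [::]]
  | len'.+1 => [::] :: [seq x :: s | x <- iota 1 b, s <- bseqs b len']
  end.

(* Every partition of perimeter n has at most n parts, each at most n, so
   the finite list bseqs n n contains all of H_n. *)
Definition H (n : nat) : seq (seq nat) :=
  [seq l <- undup (bseqs n n) | is_partition l && (perimeter l == n)].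

Definition B (n : nat) (k : int) : int :=
  Posz (count (fun l => Posz (even_parts l) == k) (H n)) : int.

(* Main.v *)
Require Import Defs.
From mathcomp Require Import all_boot all_order all_algebra.
From mathcomp Require Import zify.
Import Order.TTheory GRing.Theory Num.Theory.
Set Implicit Arguments. Unset Strict Implicit.

Lemma mem_bseqs b len l :
  (l \in bseqs b len) = (size l <= len) && all (fun x => 0 < x <= b) l.
Proof.
elim: len l => [|len IH] [|x s] //=.
rewrite in_cons /=; apply/allpairsP/idP.
- case=> [[y t]] /= [hy ht [-> ->]].
  move: hy; rewrite mem_iota => hy; move: ht; rewrite IH => /andP[h1 h2].
  rewrite ltnS h1 h2 andbT; lia.
- move=> /andP[h1 /andP[h2 h3]]; exists (x, s); split => //=.
  + rewrite mem_iota; lia.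
  + by rewrite IH -ltnS h1.
Qed.

Lemma path_head x s : path geq x s -> all (fun y => y <= x) s.
Proof.
elim: s x => [|y s IH] x //= /andP[hyx hp].
rewrite hyx /=; apply/allP => z hz.
have := allP (IH y hp) z hz; move=> h; exact: leq_trans h hyx.
Qed.

Lemma path_last x s : path geq x s -> all (fun y => last x s <= y) (x :: s).
Proof.
elim: s x => [|y s IH] x.
  by rewrite /= leqnn.
rewrite /= => /andP[hyx hp]; have := IH y hp => /= /andP[h1 h2].
by rewrite h1 h2 (leq_trans h1 hyx).
Qed.

Lemma part_cons x s :
  is_partition (x :: s) = [&& 0 < x, all (fun y => 0 < y) s & path geq x s].
Proof. by rewrite /is_partition /= andbA. Qed.

Lemma memH n (l : seq nat) : (l \in H n) = is_partition l && (perimeter l == n).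
Proof.
rewrite /H mem_filter mem_undup.
case: l => [|x s] //.
rewrite part_cons.
case: (boolP [&& 0 < x, all (fun y => 0 < y) s & path geq x s]) => //= /and3P[hx hs hp].
case: eqP => //= hper; rewrite mem_bseqs /=.
have hh := path_head hp.
rewrite /perimeter /= in hper.
apply/andP; split; first lia.
rewrite hx; apply/andP; split; first lia.
apply/allP => y hy; rewrite (allP hs y hy) /=.
have := allP hh y hy; lia.
Qed.

Definition step (s : seq (seq nat)) :=
  [seq rcons l 1 | l <- s] ++ [seq map succn l | l <- s].
Definition P n := if n is m.+1 then iter m step [:: [:: 1]] else [::].

Lemma PS n : P n.+2 = step (P n.+1).
Proof. by []. Qed.

Lemma memP n (l : seq nat) : (l \in P n) = is_partition l && (perimeter l == n).
Proof.
case: n => [|n].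
  case: l => [|x s] //=; rewrite part_cons /perimeter /=.
  case: (boolP (0 < x)) => //= hx; apply/esym/negbTE; lia.
elim: n l => [|n IH] l.
  rewrite /= in_cons in_nil orbF.
  case: l => [|x s] //=; rewrite part_cons /perimeter /=.
  apply/eqP/idP.
  - by case=> -> ->.
  - move=> /andP[/and3P[hx _ _] /eqP h].
    have hs : size s = 0 by lia.
    by case: s hs h => //= _ h; congr (_ :: _); lia.
rewrite PS /step mem_cat; apply/orP/idP.
- case=> /mapP[l' hl' ->]; move: hl'; rewrite IH;
    case: l' => [|x s] //; rewrite part_cons /perimeter /= =>
    /andP[/and3P[hx hs hp] /eqP hper].
  + rewrite part_cons all_rcons hs rcons_path hp /= size_rcons.
    rewrite hx /=; apply/andP; split; last by apply/eqP; lia.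
    have := mem_last x s; rewrite in_cons => /orP[/eqP ->|h] //.
    exact: (allP hs _ h).
  + rewrite part_cons size_map /=; apply/andP; split; last by apply/eqP; lia.
    apply/andP; split.
      by apply/allP => y /mapP[z _ ->].
    rewrite path_map; apply: sub_path hp => a b /=; by rewrite ltnS.
- case: l => [|x s] //; rewrite part_cons /perimeter /= =>
    /andP[/and3P[hx hs hp] /eqP hper].
  have hl := path_last hp.
  case: (ltnP 1 (last x s)) => hlast.
  + right; apply/mapP; exists (map predn (x :: s)).
      rewrite IH /= part_cons /perimeter /= size_map.
      have hall : all (fun y => 1 < y) (x :: s).
        by apply/allP => y hy; have := allP hl y hy; lia.
      move: hall => /= /andP[hx2 hall].
      apply/andP; split; last by apply/eqP; lia.
      apply/and3P; split; first lia.
        by apply/allP => y /mapP[z hz ->]; have := allP hall z hz; lia.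
      rewrite path_map; apply: sub_path hp => a b /=; lia.
    rewrite /= -map_comp /=; congr (_ :: _); first lia.
    rewrite -[LHS]map_id; apply/eq_in_map => y hy /=.
    have := allP hl y; rewrite in_cons hy orbT => /(_ isT); lia.
  + left.
    have hl1 : last x s = 1.
      have : 0 < last x s.
        have := mem_last x s; rewrite in_cons => /orP[/eqP ->|h] //.
        exact: (allP hs _ h).
      lia.
    case/lastP: s hs hp hper hl hl1 hlast => [|s' y] hs hp hper hl hl1 _.
      by move: hper hl1 => /= h1 h2; lia.
    apply/mapP; exists (x :: s'); last first.
      by rewrite /= -hl1 last_rcons.
    move: hs hp; rewrite all_rcons rcons_path => /andP[_ hs] /andP[hp _].
    rewrite IH part_cons /perimeter /= hx hs hp /=; apply/eqP.
    move: hper; rewrite size_rcons; lia.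
Qed.

Lemma uniqP n : uniq (P n).
Proof.
case: n => [|n] //; elim: n => [|n IH] //.
rewrite PS /step cat_uniq (map_inj_uniq (@rcons_injl _ 1)) IH.
rewrite (map_inj_uniq (inj_map succn_inj)) IH /= andbT.
apply/hasPn => l /mapP[l' hl' ->]; apply/negP => /mapP[l'' _ e].
have : 1 \in rcons l'' 1 by rewrite mem_rcons mem_head.
rewrite -e => /mapP[z hz ez].
move: hl'; rewrite -[iter _ _ _]/(P n.+1) memP => /andP[hpart _].
case: l' hz hpart {e} => [|w t] // hz; rewrite part_cons => /and3P[hw ht _].
move: hz; rewrite in_cons => /orP[/eqP hz|hz].
  by move: hw; rewrite -hz; lia.
by have := allP ht z hz; lia.
Qed.

Lemma countHP n a : count a (H n) = count a (P n).
Proof.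
apply/permP; apply: uniq_perm; first by rewrite filter_uniq // undup_uniq.
  exact: uniqP.
by move=> l; rewrite memH memP.
Qed.

Definition fk n (k : int) := count (fun l => Posz (even_parts l) == k) (P n).
Definition gk n (k : int) := count (fun l => Posz (count odd l) == k) (P n).

Lemma fkS n k : fk n.+2 k = (fk n.+1 k + gk n.+1 k)%N.
Proof.
rewrite /fk /gk PS /step count_cat !count_map; congr (_ + _)%N.
  apply: eq_count => l /=; by rewrite /even_parts -cats1 count_cat /= !addn0.
apply: eq_count => l /=; rewrite /even_parts count_map; congr (Posz _ == _).
by apply: eq_count => y /=; rewrite negbK.
Qed.

Lemma gkS n k : gk n.+2 k = (gk n.+1 (k - 1) + fk n.+1 k)%N.
Proof.
rewrite /fk /gk PS /step count_cat !count_map; congr (_ + _)%N.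
  apply: eq_count => l /=; rewrite -cats1 count_cat /= addn0.
  by apply/eqP/eqP => h; lia.
apply: eq_count => l /=; rewrite /even_parts count_map; by congr (Posz _ == _).
Qed.

Local Open Scope ring_scope.

Theorem lemma2p2 :
  B 1 0 = 1 /\
  forall (n : nat) (k : int), (2 <= n)%N ->
    B n k = B n.-1 k + B n.-1 (k - 1) + B n.-2 k - B n.-2 (k - 1).
Proof.
have BE n k : B n k = Posz (fk n k) by rewrite /B countHP.
split; first by vm_compute.
move=> [|[|n]] k // _; rewrite /= !BE.
case: n => [|m].
  rewrite fkS /fk /gk /=.
  by case: k => [[|[|?]]|?] /=.
rewrite fkS gkS.
have := fkS m (k - 1); rewrite /= => ->.
lia.
Qed.
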